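(* Every admissible Kähler class $\Omega_{\mathbf r}$ on a KS orbifold $(S_{\mathbf n},\Delta_{\mathbf m})$ contains an admissible extremal Kähler metric whose scalar curvature is an affine-linear function of $\mathfrak z$. This metric has constant scalar curvature (which is then positive) if and only if $\alpha_0\beta_1-\alpha_1\beta_0=0$. Here, for $r=0,1$, - $\alpha_r=\int_{-1}^1t^rp_c(t)\,dt$; - $\beta_r=\int_{-1}^1\bigl(r_1s_1(1+r_2t)+r_2s_2(1+r_1t)\bigr)t^r\,dt+(-1)^r\frac{p_c(-1)}{m_\infty}+\frac{p_c(1)}{m_0}$; with $s_i=2/n_i$. Equivalently, the condition is $f(r_1,r_2)=0$, where $f(r_1,r_2)=9(m_0-m_\infty)n_1n_2-6(m_0+m_\infty)n_1n_2(r_1+r_2)+6(m_0-m_\infty)n_1n_2r_1r_2+3n_2(4m_0m_\infty-n_1(m_0-m_\infty))r_1^2+3n_1(4m_0m_\infty-n_2(m_0-m_\infty))r_2^2-(4m_0m_\infty(n_1+n_2)-3(m_0-m_\infty)n_1n_2)r_1^2r_2^2$.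
   Context: Setup. $S_{\mathbf n}=\mathbb P(\mathbb 1\oplus\mathcal O(n_1,n_2))\to\mathbb{CP}^1\times\mathbb{CP}^1$ with $n_1,n_2\in\mathbb Z\setminus\{0\}$. The KS orbifold $(S_{\mathbf n},\Delta_{\mathbf m})$, with $m_0,m_\infty\in\mathbb Z^+$, has cyclic isotropy $\mathbb Z_{m_0}$ along the zero section $e_0$ and $\mathbb Z_{m_\infty}$ along the infinity section $e_\infty$. Cohomology. Let $x_1,x_2$ be the pullbacks of the generators of $H^2$ of the two $\mathbb{CP}^1$ factors, and $x_3$ the Poincaré dual of $e_\infty$. Parameters. Fix reals $r_1,r_2$ with $0<|r_i|<1$ and $r_in_i>0$, put $p_c(t)=(1+r_1t)(1+r_2t)$, and define $\Omega_{\mathbf r}/2\pi=\frac{n_1(1+r_1)}{r_1}x_1+\frac{n_2(1+r_2)}{r_2}x_2+2x_3$. Admissible metric. An admissible metric in $\Omega_{\mathbf r}$ is $g=\sum_i\frac{1+r_i\mathfrak z}{r_i}g_i+\frac{d\mathfrak z^2}{\Theta}+\Theta\theta^2$, where: - $g_i$ is a metric on $\mathbb{CP}^1$ with $\pm g_i>0$ and scalar curvature $2s_i=4/n_i$; - $\mathfrak z$ is the fiberwise moment map with $e_0=\{\mathfrak z=1\}$ and $e_\infty=\{\mathfrak z=-1\}$; - $d\theta=\omega_1+\omega_2$; - $\Theta=F/p_c$, with $F>0$ on $(-1,1)$, $F(\pm1)=0$, $F'(-1)=2p_c(-1)/m_\infty$ and $F'(1)=-2p_c(1)/m_0$. Its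 scalar curvature is $\frac{2s_1r_1}{1+r_1\mathfrak z}+\frac{2s_2r_2}{1+r_2\mathfrak z}-\frac{F''(\mathfrak z)}{p_c(\mathfrak z)}$. *)

(* Defs.v *)
From Stdlib Require Import Reals ZArith.
From Coquelicot Require Import Coquelicot.
Open Scope R_scope.

Definition p_c (r1 r2 t : R) : R := (1 + r1 * t) * (1 + r2 * t).

(* s_i = 2 / n_i  (so that g_i has scalar curvature 2 s_i = 4 / n_i) *)
Definition s_i (n : Z) : R := 2 / IZR n.

(* Admissible profile data for an admissible metric in Omega_r on the
   KS orbifold (S_n, Delta_m): the function F on the moment interval. *)
Definition admissible_F (r1 r2 : R) (m0 minf : nat) (F : R -> R) : Prop :=
  (forall k x, ex_derive_n F k x) /\
  (forall z, -1 < z < 1 -> 0 < F z) /\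
  F (-1) = 0 /\ F 1 = 0 /\
  Derive F (-1) = 2 * p_c r1 r2 (-1) / INR minf /\
  Derive F 1 = - 2 * p_c r1 r2 1 / INR m0.

Definition scalF (n1 n2 : Z) (r1 r2 : R) (F : R -> R) (z : R) : R :=
  2 * s_i n1 * r1 / (1 + r1 * z) + 2 * s_i n2 * r2 / (1 + r2 * z)
  - Derive_n F 2 z / p_c r1 r2 z.

Definition scal_affine (n1 n2 : Z) (r1 r2 : R) (F : R -> R) : Prop :=
  exists A B : R, forall z, -1 <= z <= 1 -> scalF n1 n2 r1 r2 F z = A * z + B.

Definition scal_constant (n1 n2 : Z) (r1 r2 : R) (F : R -> R) : Prop :=
  forall z w, -1 <= z <= 1 -> -1 <= w <= 1 ->
    scalF n1 n2 r1 r2 F z = scalF n1 n2 r1 r2 F w.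

Definition alpha (r1 r2 : R) (k : nat) : R :=
  RInt (fun t => t ^ k * p_c r1 r2 t) (-1) 1.

Definition beta (n1 n2 : Z) (r1 r2 : R) (m0 minf : nat) (k : nat) : R :=
  RInt (fun t => (r1 * s_i n1 * (1 + r2 * t) + r2 * s_i n2 * (1 + r1 * t)) * t ^ k)
       (-1) 1
  + (-1) ^ k * p_c r1 r2 (-1) / INR minf + p_c r1 r2 1 / INR m0.

Definition f_poly (n1 n2 : Z) (m0 minf : nat) (r1 r2 : R) : R :=
  let N1 := IZR n1 in let N2 := IZR n2 in
  let M0 := INR m0 in let Mi := INR minf in
  9 * (M0 - Mi) * N1 * N2 - 6 * (M0 + Mi) * N1 * N2 * (r1 + r2)
  + 6 * (M0 - Mi) * N1 * N2 * r1 * r2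
  + 3 * N2 * (4 * M0 * Mi - N1 * (M0 - Mi)) * r1 ^ 2
  + 3 * N1 * (4 * M0 * Mi - N2 * (M0 - Mi)) * r2 ^ 2
  - (4 * M0 * Mi * (N1 + N2) - 3 * (M0 - Mi) * N1 * N2) * r1 ^ 2 * r2 ^ 2.

(* Main.v *)
Require Import Defs.
From Stdlib Require Import Reals ZArith Lra Psatz Lia.
From Coquelicot Require Import Coquelicot.
Open Scope R_scope.

Definition al0 r1 r2 := 2 + 2*(r1*r2)/3.
Definition al1 r1 r2 := 2*(r1+r2)/3.
Definition al2 r1 r2 := 2/3 + 2*(r1*r2)/5.
Definition be0 r1 r2 s1 s2 M0 Mi :=
  2*(r1*s1+r2*s2) + (1-r1)*(1-r2)/Mi + (1+r1)*(1+r2)/M0.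
Definition be1 r1 r2 s1 s2 M0 Mi :=
  2/3*(r1*r2)*(s1+s2) - (1-r1)*(1-r2)/Mi + (1+r1)*(1+r2)/M0.
Definition Dl r1 r2 := al0 r1 r2 * al2 r1 r2 - al1 r1 r2 ^ 2.
Definition cA r1 r2 s1 s2 M0 Mi :=
  2*(al0 r1 r2 * be1 r1 r2 s1 s2 M0 Mi - al1 r1 r2 * be0 r1 r2 s1 s2 M0 Mi) / Dl r1 r2.
Definition cB r1 r2 s1 s2 M0 Mi :=
  2*(al2 r1 r2 * be0 r1 r2 s1 s2 M0 Mi - al1 r1 r2 * be1 r1 r2 s1 s2 M0 Mi) / Dl r1 r2.
Definition q0 r1 r2 s1 s2 M0 Mi := 2*(s1*r1+s2*r2) - cB r1 r2 s1 s2 M0 Mi.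
Definition q1 r1 r2 s1 s2 M0 Mi := 2*r1*r2*(s1+s2) - cA r1 r2 s1 s2 M0 Mi
   - cB r1 r2 s1 s2 M0 Mi * (r1+r2).
Definition q2 r1 r2 s1 s2 M0 Mi := - (cA r1 r2 s1 s2 M0 Mi*(r1+r2) + cB r1 r2 s1 s2 M0 Mi*(r1*r2)).
Definition q3 r1 r2 s1 s2 M0 Mi := - cA r1 r2 s1 s2 M0 Mi*(r1*r2).
Definition Qd r1 r2 s1 s2 M0 Mi z :=
  q0 r1 r2 s1 s2 M0 Mi + q1 r1 r2 s1 s2 M0 Mi * z + q2 r1 r2 s1 s2 M0 Mi * z^2
  + q3 r1 r2 s1 s2 M0 Mi * z^3.
Definition R1 r1 r2 s1 s2 M0 Mi z :=
  q0 r1 r2 s1 s2 M0 Mi * z + q1 r1 r2 s1 s2 M0 Mi * z^2/2 + q2 r1 r2 s1 s2 M0 Mi * z^3/3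
  + q3 r1 r2 s1 s2 M0 Mi * z^4/4.
Definition R2 r1 r2 s1 s2 M0 Mi z :=
  q0 r1 r2 s1 s2 M0 Mi * z^2/2 + q1 r1 r2 s1 s2 M0 Mi * z^3/6 + q2 r1 r2 s1 s2 M0 Mi * z^4/12
  + q3 r1 r2 s1 s2 M0 Mi * z^5/20.
Definition D0 r1 r2 (Mi : R) := 2*((1-r1)*(1-r2))/Mi.
Definition F1d r1 r2 s1 s2 M0 Mi z :=
  D0 r1 r2 Mi + R1 r1 r2 s1 s2 M0 Mi z - R1 r1 r2 s1 s2 M0 Mi (-1).
Definition Fd r1 r2 s1 s2 M0 Mi z :=
  R2 r1 r2 s1 s2 M0 Mi z - R2 r1 r2 s1 s2 M0 Mi (-1)
  + (D0 r1 r2 Mi - R1 r1 r2 s1 s2 M0 Mi (-1)) * (z+1).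

Lemma Dl_pos r1 r2 : Rabs r1 < 1 -> Rabs r2 < 1 -> 0 < Dl r1 r2.
Proof.
intros h1 h2. assert (r1*r1 < 1) by (apply Rabs_def2 in h1; nra).
assert (r2*r2 < 1) by (apply Rabs_def2 in h2; nra).
unfold Dl, al0, al1, al2. simpl. nra.
Qed.

Lemma F_at1 r1 r2 s1 s2 M0 Mi : Dl r1 r2 <> 0 -> M0 <> 0 -> Mi <> 0 ->
  Fd r1 r2 s1 s2 M0 Mi 1 = 0.
Proof.
intros hD h0 hi. revert hD. unfold Fd, R2, R1, D0, q0, q1, q2, q3, cA, cB, Dl, al0, al1, al2, be0, be1.
intro hD. field. repeat split; auto; intro E; apply hD; nra.
Qed.

Lemma F1_at1 r1 r2 s1 s2 M0 Mi : Dl r1 r2 <> 0 -> M0 <> 0 -> Mi <> 0 ->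
  F1d r1 r2 s1 s2 M0 Mi 1 = - 2 * ((1+r1)*(1+r2)) / M0.
Proof.
intros hD h0 hi. revert hD. unfold F1d, R2, R1, D0, q0, q1, q2, q3, cA, cB, Dl, al0, al1, al2, be0, be1.
intro hD. field. repeat split; auto; intro E; apply hD; nra.
Qed.

Lemma Derive_n_S (f : R -> R) n x : Derive_n f (S n) x = Derive_n (Derive f) n x.
Proof.
revert x; induction n; intro x; [reflexivity|].
simpl. apply Derive_ext. intro t. exact (IHn t).
Qed.

Lemma smooth_of_deriv (f g : R -> R) :
  (forall x, is_derive f x (g x)) -> (forall k x, ex_derive_n g k x) ->
  forall k x, ex_derive_n f k x.
Proof.
intros Hd Hg k x. destruct k as [|k]; [exact I|].
simpl. destruct k as [|j].
- simpl. eexists; apply Hd.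
- apply ex_derive_ext with (f := Derive_n g j).
  + intro t. rewrite Derive_n_S. apply Derive_n_ext. intro u.
    symmetry; apply is_derive_unique, Hd.
  + exact (Hg (S j) x).
Qed.

Lemma smooth_cubic c0 c1 c2 c3 : forall k x,
  ex_derive_n (fun z => c0 + c1 * z + c2 * z^2 + c3 * z^3) k x.
Proof.
apply smooth_of_deriv with (g := fun z => c1 + 2*c2*z + 3*c3*z^2).
{ intro x. auto_derive; auto. simpl. field. }
apply smooth_of_deriv with (g := fun z => 2*c2 + 6*c3*z).
{ intro x. auto_derive; auto. simpl. field. }
apply smooth_of_deriv with (g := fun z => 6*c3).
{ intro x. auto_derive; auto. simpl. field. }
intros k x. apply ex_derive_n_const.
Qed.

Lemma mvt (f df : R -> R) a b : a < b -> (forall x, is_derive f x (df x)) ->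
  exists c, a <= c <= b /\ f b - f a = df c * (b - a).
Proof.
intros hab Hd.
destruct (MVT_gen f a b df) as [c [hc e]].
- intros; apply Hd.
- intros x _. apply continuity_pt_filterlim.
  exact (ex_derive_continuous (K:=R_AbsRing) (V:=R_NormedModule) f x (ex_intro _ _ (Hd x))).
- exists c. rewrite Rmin_left, Rmax_right in hc by lra. split; auto.
Qed.

Lemma near_pos (F : R -> R) x l z : is_derive F x l -> 0 < l -> F x = 0 -> x < z ->
  exists y, x < y < z /\ 0 < F y.
Proof.
intros Hd hl h0 hz. apply is_derive_Reals in Hd.
destruct (Hd (l/2) ltac:(lra)) as [d Hdd].
set (h := Rmin (d/2) ((z-x)/2)).
assert (hp : 0 < h) by (unfold h; apply Rmin_pos; [destruct d; simpl; lra | lra]).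
assert (h1 : h <= d/2) by apply Rmin_l.
assert (h2 : h <= (z-x)/2) by apply Rmin_r.
assert (dp := cond_pos d).
specialize (Hdd h ltac:(lra) ltac:(rewrite Rabs_right; lra)).
exists (x+h). split; [lra|].
rewrite h0, Rminus_0_r in Hdd.
apply Rabs_def2 in Hdd. destruct Hdd as [_ Hlow].
assert (0 < F (x+h) / h) by lra.
replace (F (x+h)) with (F (x+h)/h * h) by (field; lra). nra.
Qed.

Lemma pos_F (F F1 Q : R -> R) w :
  (forall x, is_derive F x (F1 x)) -> (forall x, is_derive F1 x (Q x)) ->
  F (-1) = 0 -> F 1 = 0 -> 0 < F1 (-1) -> F1 1 < 0 ->
  (forall a b c, -1 <= a -> a < b -> b < c -> c <= 1 -> Q a < 0 -> Q c < 0 -> Q b < 0) ->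
  -1 < w < 1 -> 0 < F w.
Proof.
intros HF HF1 Fm Fp F1m F1p Hc hw.
assert (key : forall u v, -1 <= u -> u < v -> v <= 1 ->
   F1 u <= F1 v -> F1 u < F1 (-1) -> F1 1 < F1 v -> False).
{ intros u v hu huv hv h1 h2 h3.
  assert (hu' : -1 < u) by (destruct (Req_dec u (-1)); [subst; lra| lra]).
  assert (hv' : v < 1) by (destruct (Req_dec v 1); [subst; lra| lra]).
  destruct (mvt F1 Q (-1) u hu' HF1) as [a [ha ea]].
  destruct (mvt F1 Q u v huv HF1) as [b [hb eb]].
  destruct (mvt F1 Q v 1 hv' HF1) as [c [hc ec]].
  assert (Qa : Q a < 0) by nra.
  assert (Qb : 0 <= Q b) by nra.
  assert (Qc : Q c < 0) by nra.
  assert (a < b) by (destruct (Req_dec a b); [subst; lra | lra]).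
  assert (b < c) by (destruct (Req_dec b c); [subst; lra | lra]).
  specialize (Hc a b c ltac:(lra) ltac:(lra) ltac:(lra) ltac:(lra) Qa Qc). lra. }
destruct (Rlt_or_le 0 (F w)) as [h|h]; [exact h|exfalso].
destruct (mvt F F1 (-1) w ltac:(lra) HF) as [u [hu eu]].
destruct (mvt F F1 w 1 ltac:(lra) HF) as [v [hv ev]].
assert (F1u : F1 u <= 0) by nra.
assert (F1v : 0 <= F1 v) by nra.
destruct (Req_dec u v) as [E|E].
- subst v. assert (F1 u = 0) by lra. assert (u = w) by lra. subst u.
  assert (Fw : F w = 0) by nra.
  destruct (near_pos F (-1) (F1 (-1)) w (HF (-1)) F1m Fm ltac:(lra)) as [y [hy Fy]].
  destruct (mvt F F1 y w ltac:(lra) HF) as [u' [hu' eu']].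
  assert (F1 u' < 0) by nra.
  assert (u' < w) by (destruct (Req_dec u' w); [subst; lra | lra]).
  apply (key u' w); lra.
- apply (key u v); lra.
Qed.
Lemma inv_conv r a b c : a < b -> b < c -> 0 < 1 + r*a -> 0 < 1 + r*c ->
  1/(1+r*b) <= ((c-b)/(c-a))/(1+r*a) + ((b-a)/(c-a))/(1+r*c).
Proof.
intros hab hbc ha hc.
assert (hb : 0 < 1 + r*b).
{ assert (1 + r*b = ((c-b)*(1+r*a) + (b-a)*(1+r*c))/(c-a)) by (field; lra).
  rewrite H. apply Rdiv_lt_0_compat; nra. }
apply Rminus_le. 
replace (1 / (1 + r * b) - ((c - b) / (c - a) / (1 + r * a) + (b - a) / (c - a) / (1 + r * c)))
  with (- (r*r*(b-a)*(c-b)) / ((1+r*a)*(1+r*b)*(1+r*c))) by (field; lra).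
apply Rmult_le_0_r.
- assert (0 <= r*r) by nra. assert (0 <= r*r*(b-a)*(c-b)).
  { apply Rmult_le_pos; [apply Rmult_le_pos; lra|lra]. } lra.
- left. apply Rinv_0_lt_compat. repeat apply Rmult_lt_0_compat; auto.
Qed.

Lemma conv_sign (Q : R -> R) r1 r2 c1 c2 A B :
  -1 < r1 < 1 -> -1 < r2 < 1 -> 0 <= c1 -> 0 <= c2 ->
  (forall z, -1 <= z <= 1 -> Q z = (1+r1*z)*(1+r2*z)*(c1/(1+r1*z) + c2/(1+r2*z) - A*z - B)) ->
  forall a b c, -1 <= a -> a < b -> b < c -> c <= 1 -> Q a < 0 -> Q c < 0 -> Q b < 0.
Proof.
intros h1 h2 hc1 hc2 HQ a b c ha hab hbc hc Qa Qc.
assert (P : forall z, -1 <= z <= 1 -> 0 < 1 + r1*z /\ 0 < 1 + r2*z).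
{ intros z [hz1 hz2]. destruct h1, h2. split.
  - destruct (Rle_lt_or_eq_dec (-1) z hz1) as [q|q]; [nra|subst; nra].
  - destruct (Rle_lt_or_eq_dec (-1) z hz1) as [q|q]; [nra|subst; nra]. }
destruct (P a) as [pa1 pa2]; [lra|]. destruct (P b) as [pb1 pb2]; [lra|].
destruct (P c) as [pc1 pc2]; [lra|].
rewrite HQ in Qa, Qc |- * by lra.
set (g z := c1/(1+r1*z) + c2/(1+r2*z) - A*z - B) in *.
fold (g a) in Qa. fold (g c) in Qc. fold (g b).
assert (ga : g a < 0).
{ destruct (Rlt_or_le (g a) 0); auto. assert (0 <= (1+r1*a)*(1+r2*a)*g a); [|lra].
  apply Rmult_le_pos; [nra|lra]. }
assert (gc : g c < 0).
{ destruct (Rlt_or_le (g c) 0); auto. assert (0 <= (1+r1*c)*(1+r2*c)*g c); [|lra].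
  apply Rmult_le_pos; [nra|lra]. }
assert (gb : g b < 0).
{ set (l := (c-b)/(c-a)). set (m := (b-a)/(c-a)).
  assert (hl : 0 < l) by (apply Rdiv_lt_0_compat; lra).
  assert (hm : 0 < m) by (apply Rdiv_lt_0_compat; lra).
  assert (lm : l + m = 1) by (unfold l, m; field; lra).
  assert (lb : l*a + m*c = b) by (unfold l, m; field; lra).
  pose proof (inv_conv r1 a b c hab hbc pa1 pc1) as i1.
  pose proof (inv_conv r2 a b c hab hbc pa2 pc2) as i2.
  fold l m in i1, i2.
  assert (g b <= l * g a + m * g c).
  { unfold g. 
    assert (e1 : c1 / (1 + r1 * b) = c1 * (1/(1+r1*b))) by (field; lra).
    assert (e2 : c2 / (1 + r2 * b) = c2 * (1/(1+r2*b))) by (field; lra).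
    rewrite e1, e2.
    assert (c1 * (1/(1+r1*b)) <= c1 * (l/(1+r1*a) + m/(1+r1*c))) by (apply Rmult_le_compat_l; auto).
    assert (c2 * (1/(1+r2*b)) <= c2 * (l/(1+r2*a) + m/(1+r2*c))) by (apply Rmult_le_compat_l; auto).
    assert (E : l * (c1 / (1 + r1 * a) + c2 / (1 + r2 * a) - A * a - B) +
        m * (c1 / (1 + r1 * c) + c2 / (1 + r2 * c) - A * c - B)
      = c1 * (l/(1+r1*a) + m/(1+r1*c)) + c2 * (l/(1+r2*a) + m/(1+r2*c)) - A*(l*a+m*c) - B*(l+m))
      by (field; lra).
    rewrite E, lm, lb. lra. }
  nra. }
assert (0 < (1+r1*b)*(1+r2*b)) by (apply Rmult_lt_0_compat; auto). nra.
Qed.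

Lemma RInt_poly (f G : R -> R) :
  (forall x, is_derive G x (f x)) -> (forall x, ex_derive f x) ->
  RInt f (-1) 1 = G 1 - G (-1).
Proof.
intros HG Hf. apply is_RInt_unique.
assert (H := is_RInt_derive G f (-1) 1 (fun x _ => HG x)
  (fun x _ => ex_derive_continuous (K:=R_AbsRing) (V:=R_NormedModule) f x (Hf x))).
exact H.
Qed.

Lemma alpha0_eq r1 r2 : alpha r1 r2 0 = al0 r1 r2.
Proof.
unfold alpha. rewrite (RInt_poly _ (fun t => t + (r1+r2)*t^2/2 + r1*r2*t^3/3)).
- unfold al0; field.
- intro x. unfold p_c. auto_derive; auto. simpl. field.
- intro x. unfold p_c. auto_derive; auto.
Qed.

Lemma alpha1_eq r1 r2 : alpha r1 r2 1 = al1 r1 r2.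
Proof.
unfold alpha. rewrite (RInt_poly _ (fun t => t^2/2 + (r1+r2)*t^3/3 + r1*r2*t^4/4)).
- unfold al1; field.
- intro x. unfold p_c. auto_derive; auto. simpl. field.
- intro x. unfold p_c. auto_derive; auto.
Qed.

Lemma beta0_eq n1 n2 r1 r2 m0 minf : INR m0 <> 0 -> INR minf <> 0 ->
  beta n1 n2 r1 r2 m0 minf 0 = be0 r1 r2 (s_i n1) (s_i n2) (INR m0) (INR minf).
Proof.
intros h0 hi. unfold beta. rewrite (RInt_poly _ (fun t => (r1*s_i n1 + r2 * s_i n2)*t
   + r1*r2*(s_i n1 + s_i n2)*t^2/2)).
- unfold be0, p_c. simpl. field; auto.
- intro x. auto_derive; auto. simpl. field.
- intro x. auto_derive; auto.
Qed.

Lemma beta1_eq n1 n2 r1 r2 m0 minf : INR m0 <> 0 -> INR minf <> 0 ->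
  beta n1 n2 r1 r2 m0 minf 1 = be1 r1 r2 (s_i n1) (s_i n2) (INR m0) (INR minf).
Proof.
intros h0 hi. unfold beta. rewrite (RInt_poly _ (fun t => (r1*s_i n1 + r2 * s_i n2)*t^2/2
   + r1*r2*(s_i n1 + s_i n2)*t^3/3)).
- unfold be1, p_c. simpl. field; auto.
- intro x. auto_derive; auto. simpl. field.
- intro x. auto_derive; auto.
Qed.

Lemma Fd_der r1 r2 s1 s2 M0 Mi x :
  is_derive (Fd r1 r2 s1 s2 M0 Mi) x (F1d r1 r2 s1 s2 M0 Mi x).
Proof.
unfold Fd, F1d, R2, R1. auto_derive; auto. simpl. field.
Qed.

Lemma F1d_der r1 r2 s1 s2 M0 Mi x :
  is_derive (F1d r1 r2 s1 s2 M0 Mi) x (Qd r1 r2 s1 s2 M0 Mi x).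
Proof.
unfold F1d, Qd, R1. auto_derive; auto. simpl. field.
Qed.

Lemma Qd_eq r1 r2 s1 s2 M0 Mi z : 1 + r1*z <> 0 -> 1 + r2*z <> 0 ->
  Qd r1 r2 s1 s2 M0 Mi z = (1+r1*z)*(1+r2*z)*(2*s1*r1/(1+r1*z) + 2*s2*r2/(1+r2*z)
     - cA r1 r2 s1 s2 M0 Mi * z - cB r1 r2 s1 s2 M0 Mi).
Proof.
intros h1 h2. unfold Qd, q0, q1, q2, q3. field. auto.
Qed.

Lemma D_f N1 N2 M0 Mi r1 r2 : N1 <> 0 -> N2 <> 0 -> M0 <> 0 -> Mi <> 0 ->
  (al0 r1 r2 * be1 r1 r2 (2/N1) (2/N2) M0 Mi - al1 r1 r2 * be0 r1 r2 (2/N1) (2/N2) M0 Mi)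
   * (9 * N1 * N2 * M0 * Mi) =
  -2 * (9 * (M0 - Mi) * N1 * N2 - 6 * (M0 + Mi) * N1 * N2 * (r1 + r2)
  + 6 * (M0 - Mi) * N1 * N2 * r1 * r2
  + 3 * N2 * (4 * M0 * Mi - N1 * (M0 - Mi)) * r1 ^ 2
  + 3 * N1 * (4 * M0 * Mi - N2 * (M0 - Mi)) * r2 ^ 2
  - (4 * M0 * Mi * (N1 + N2) - 3 * (M0 - Mi) * N1 * N2) * r1 ^ 2 * r2 ^ 2).
Proof.
intros. unfold al0, al1, be0, be1. field. auto.
Qed.

Theorem mainTheorem12 (n1 n2 : Z) (m0 minf : nat) (r1 r2 : R) :
  n1 <> 0%Z -> n2 <> 0%Z -> (0 < m0)%nat -> (0 < minf)%nat ->
  0 < Rabs r1 < 1 -> 0 < Rabs r2 < 1 ->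
  0 < r1 * IZR n1 -> 0 < r2 * IZR n2 ->
  exists F : R -> R,
    admissible_F r1 r2 m0 minf F /\
    scal_affine n1 n2 r1 r2 F /\
    (scal_constant n1 n2 r1 r2 F <->
       alpha r1 r2 0 * beta n1 n2 r1 r2 m0 minf 1
       - alpha r1 r2 1 * beta n1 n2 r1 r2 m0 minf 0 = 0) /\
    (scal_constant n1 n2 r1 r2 F ->
       forall z, -1 <= z <= 1 -> 0 < scalF n1 n2 r1 r2 F z) /\
    (alpha r1 r2 0 * beta n1 n2 r1 r2 m0 minf 1
       - alpha r1 r2 1 * beta n1 n2 r1 r2 m0 minf 0 = 0 <->
     f_poly n1 n2 m0 minf r1 r2 = 0).
Proof.
intros hn1 hn2 hm0 hmi [_ hr1] [_ hr2] hp1 hp2.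
assert (N1 : IZR n1 <> 0) by (apply not_0_IZR; auto).
assert (N2 : IZR n2 <> 0) by (apply not_0_IZR; auto).
assert (M0p : 0 < INR m0) by (apply lt_0_INR; lia).
assert (Mip : 0 < INR minf) by (apply lt_0_INR; lia).
assert (M0 : INR m0 <> 0) by lra. assert (Mi : INR minf <> 0) by lra.
assert (hD := Dl_pos r1 r2 hr1 hr2).
apply Rabs_def2 in hr1. apply Rabs_def2 in hr2.
assert (hs1 : 0 < s_i n1 * r1).
{ unfold s_i. replace (2 / IZR n1 * r1) with (2 * (r1 * IZR n1) / (IZR n1 * IZR n1)) by (field; auto).
  apply Rdiv_lt_0_compat; [lra|]. destruct (Rlt_or_le 0 (IZR n1)); [nra|]. assert (IZR n1 < 0) by lra. nra. }
assert (hs2 : 0 < s_i n2 * r2).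
{ unfold s_i. replace (2 / IZR n2 * r2) with (2 * (r2 * IZR n2) / (IZR n2 * IZR n2)) by (field; auto).
  apply Rdiv_lt_0_compat; [lra|]. destruct (Rlt_or_le 0 (IZR n2)); [nra|]. assert (IZR n2 < 0) by lra. nra. }
assert (P1 : forall z, -1 <= z <= 1 -> 0 < 1 + r1*z).
{ intros z [hz1 hz2]. destruct (Rle_lt_or_eq_dec (-1) z hz1) as [q|q]; [nra|subst; nra]. }
assert (P2 : forall z, -1 <= z <= 1 -> 0 < 1 + r2*z).
{ intros z [hz1 hz2]. destruct (Rle_lt_or_eq_dec (-1) z hz1) as [q|q]; [nra|subst; nra]. }
set (s1 := s_i n1) in *. set (s2 := s_i n2) in *.
set (m := INR m0) in *. set (mi := INR minf) in *.
set (A := cA r1 r2 s1 s2 m mi). set (B := cB r1 r2 s1 s2 m mi).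
assert (D2 : forall z, Derive_n (Fd r1 r2 s1 s2 m mi) 2 z = Qd r1 r2 s1 s2 m mi z).
{ intro z. simpl. rewrite (Derive_ext _ (F1d r1 r2 s1 s2 m mi)).
  - apply is_derive_unique, F1d_der.
  - intro t. apply is_derive_unique, Fd_der. }
assert (SC : forall z, -1 <= z <= 1 -> scalF n1 n2 r1 r2 (Fd r1 r2 s1 s2 m mi) z = A * z + B).
{ intros z hz. unfold scalF. rewrite D2. fold s1 s2.
  specialize (P1 z hz). specialize (P2 z hz).
  rewrite Qd_eq by lra. unfold p_c. fold A B. field. lra. }
assert (hA : alpha r1 r2 0 * beta n1 n2 r1 r2 m0 minf 1
       - alpha r1 r2 1 * beta n1 n2 r1 r2 m0 minf 0 =
       al0 r1 r2 * be1 r1 r2 s1 s2 m mi - al1 r1 r2 * be0 r1 r2 s1 s2 m mi).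
{ rewrite alpha0_eq, alpha1_eq, beta0_eq, beta1_eq by auto. reflexivity. }
rewrite hA.
assert (AD : A = 0 <-> al0 r1 r2 * be1 r1 r2 s1 s2 m mi - al1 r1 r2 * be0 r1 r2 s1 s2 m mi = 0).
{ unfold A, cA. split; intro h.
  - apply (Rmult_eq_compat_r (Dl r1 r2)) in h. field_simplify in h; lra.
  - rewrite h. field. lra. }
assert (SCc : scal_constant n1 n2 r1 r2 (Fd r1 r2 s1 s2 m mi) <-> A = 0).
{ split.
  - intro h. specialize (h (-1) 1 ltac:(lra) ltac:(lra)). rewrite !SC in h by lra. lra.
  - intros h z w hz hw. rewrite !SC by auto. rewrite h. ring. }
exists (Fd r1 r2 s1 s2 m mi). split; [|split; [|split; [|split]]].
- split; [|split; [|split; [|split; [|split]]]].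
  + apply smooth_of_deriv with (g := F1d r1 r2 s1 s2 m mi); [apply Fd_der|].
    apply smooth_of_deriv with (g := Qd r1 r2 s1 s2 m mi); [apply F1d_der|].
    exact (smooth_cubic (q0 r1 r2 s1 s2 m mi) (q1 r1 r2 s1 s2 m mi) (q2 r1 r2 s1 s2 m mi) (q3 r1 r2 s1 s2 m mi)).
  + intros z hz. apply (pos_F _ (F1d r1 r2 s1 s2 m mi) (Qd r1 r2 s1 s2 m mi)).
    * apply Fd_der.
    * apply F1d_der.
    * unfold Fd. ring.
    * apply F_at1; lra.
    * unfold F1d, D0. replace (2 * ((1 - r1) * (1 - r2)) / mi + R1 r1 r2 s1 s2 m mi (-1) - R1 r1 r2 s1 s2 m mi (-1)) with (2 * ((1 - r1) * (1 - r2)) / mi) by ring. apply Rdiv_lt_0_compat; [|lra].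
      assert (0 < (1-r1)*(1-r2)) by (apply Rmult_lt_0_compat; lra). lra.
    * rewrite F1_at1 by lra. assert (0 < (1+r1)*(1+r2)) by (apply Rmult_lt_0_compat; lra).
      unfold Rdiv. assert (0 < / m) by (apply Rinv_0_lt_compat; lra). nra.
    * apply (conv_sign _ r1 r2 (2*s1*r1) (2*s2*r2) A B); try lra.
      intros x hx. apply Qd_eq. specialize (P1 x hx); lra. specialize (P2 x hx); lra.
    * exact hz.
  + unfold Fd. ring.
  + apply F_at1; lra.
  + rewrite (is_derive_unique _ _ _ (Fd_der r1 r2 s1 s2 m mi (-1))).
    unfold F1d, D0, p_c. fold mi. field. lra.
  + rewrite (is_derive_unique _ _ _ (Fd_der r1 r2 s1 s2 m mi 1)).
    rewrite F1_at1 by lra. unfold p_c. fold m. field. lra.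
- exists A, B. exact SC.
- rewrite SCc. exact AD.
- intros h z hz. rewrite SC by auto. apply SCc in h. rewrite h, Rmult_0_l, Rplus_0_l.
  apply AD in h. unfold B, cB.
  assert (a0p : 0 < al0 r1 r2) by (unfold al0; nra).
  assert (b0p : 0 < be0 r1 r2 s1 s2 m mi).
  { unfold be0. assert (0 < (1-r1)*(1-r2)) by (apply Rmult_lt_0_compat; lra).
    assert (0 < (1+r1)*(1+r2)) by (apply Rmult_lt_0_compat; lra).
    assert (0 < (1-r1)*(1-r2)/mi) by (apply Rdiv_lt_0_compat; lra).
    assert (0 < (1+r1)*(1+r2)/m) by (apply Rdiv_lt_0_compat; lra). lra. }
  assert (E : be1 r1 r2 s1 s2 m mi = al1 r1 r2 * be0 r1 r2 s1 s2 m mi / al0 r1 r2)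
    by (field_simplify_eq; lra).
  rewrite E. replace (2 * (al2 r1 r2 * be0 r1 r2 s1 s2 m mi -
     al1 r1 r2 * (al1 r1 r2 * be0 r1 r2 s1 s2 m mi / al0 r1 r2)) / Dl r1 r2)
    with (2 * be0 r1 r2 s1 s2 m mi / al0 r1 r2).
  + apply Rdiv_lt_0_compat; lra.
  + unfold Dl. field. unfold Dl in hD; split; lra.
- pose proof (D_f (IZR n1) (IZR n2) m mi r1 r2 N1 N2 ltac:(lra) ltac:(lra)) as HF.
  unfold s1, s2, s_i. unfold f_poly. fold m mi. split; intro h.
  + rewrite h, Rmult_0_l in HF. lra.
  + rewrite h, Rmult_0_r in HF. assert (H9 : 9 * IZR n1 * IZR n2 * m * mi <> 0).
    { repeat apply Rmult_integral_contrapositive_currified; lra. }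
    apply (Rmult_eq_reg_r _ _ _ (eq_trans HF (eq_sym (Rmult_0_l _))) ) in H9. exact H9.
Qed.
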